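(* With $\phi$, $M$, $\mu$ as constructed below, $$\phi\otimes\phi(x)\sim 2M\int_x^{x+1}\phi(u)\,du=2M^2\mu((x,x+1])\quad (x\to\infty).$$
   Context: $f(x)\sim g(x)$ means $\lim_{x\to\infty}f(x)/g(x)=1$; $f\otimes g(x):=\int_{-\infty}^\infty f(x-u)g(u)\,du$. Construction: fix $1<x_0<b$ and $\delta\in(0,1)$ with $\delta<\min(x_0-1,\,b-x_0)$. Let $h$ be a continuous periodic function on $\mathbb{R}$ with period $\log b$ such that $h(\log x)>0$ for $x\in[1,x_0)\cup(x_0,b]$, $h(\log x_0)=0$, and $h(\log x)=-1/\log|x-x_0|$ for $0<|x-x_0|<\delta$. For $\alpha>0$ let $\phi(x):=x^{-\alpha-1}h(\log x)\mathbf{1}_{[1,\infty)}(x)$, $M:=\int_1^\infty x^{-1-\alpha}h(\log x)\,dx$, and $\mu(dx):=M^{-1}\phi(x)\,dx$. *)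

(* Defs.v *)
From Stdlib Require Import Reals Lra ClassicalEpsilon.
Open Scope R_scope.

Definition integrable_on (f : R -> R) (a b : R) : Prop :=
  inhabited (Riemann_integrable f a b).

(* the (proper) Riemann integral \int_a^b f, as a total function
   (meaningful when f is integrable on [a,b]; value is proof-independent) *)
Definition RInt (f : R -> R) (a b : R) : R :=
  epsilon (inhabits 0)
    (fun l => exists pr : Riemann_integrable f a b, RiemannInt pr = l).

Definition is_improper_int_from (f : R -> R) (a l : R) : Prop :=
  (forall b, a <= b -> integrable_on f a b) /\
  (forall eps, 0 < eps -> exists N, forall b, N <= b ->
      Rabs (RInt f a b - l) < eps).

Definition improper_int_from (f : R -> R) (a : R) : R :=
  epsilon (inhabits 0) (fun l => is_improper_int_from f a l).

Definition is_improper_int (f : R -> R) (l : R) : Prop :=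
  (forall a b, a <= b -> integrable_on f a b) /\
  (forall eps, 0 < eps -> exists N, forall a b, a <= - N -> N <= b ->
      Rabs (RInt f a b - l) < eps).

Definition improper_int (f : R -> R) : R :=
  epsilon (inhabits 0) (fun l => is_improper_int f l).

Definition conv (f g : R -> R) (x : R) : R :=
  improper_int (fun u => f (x - u) * g u).

Definition asymp (f g : R -> R) : Prop :=
  forall eps, 0 < eps -> exists N, forall x, N <= x ->
    Rabs (f x / g x - 1) < eps.

Definition phi_fun (alpha : R) (h : R -> R) (x : R) : R :=
  if Rle_dec 1 x then Rpower x (- alpha - 1) * h (ln x) else 0.

Definition M_const (alpha : R) (h : R -> R) : R :=
  improper_int_from (fun x => Rpower x (- 1 - alpha) * h (ln x)) 1.

(* mu((x,y]) for mu(dx) = M^{-1} phi(x) dx (absolutely continuous, so the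
   endpoint convention is immaterial) *)
Definition mu_Ioc (alpha : R) (h : R -> R) (x y : R) : R :=
  / M_const alpha h * RInt (phi_fun alpha h) x y.

(* Main.v *)
Require Import Defs.
From Stdlib Require Import Reals Lra Lia ZArith ClassicalEpsilon.
From Coquelicot Require Import Coquelicot.
Open Scope R_scope.

Lemma RIntD_eq f a b : ex_RInt f a b -> Defs.RInt f a b = RInt f a b.
Proof.
  intros H. unfold Defs.RInt.
  assert (E : exists l, exists pr : Riemann_integrable f a b, RiemannInt pr = l).
  { exists (RiemannInt (ex_RInt_Reals_0 _ _ _ H)). eexists; reflexivity. }
  destruct (epsilon_spec (inhabits 0) _ E) as [pr Hpr].
  rewrite <- Hpr. symmetry. apply RInt_Reals.
Qed.

Lemma integrable_of f a b : ex_RInt f a b -> integrable_on f a b.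
Proof. intros H. constructor. apply ex_RInt_Reals_0; exact H. Qed.

Lemma improper_from_unique f a l1 l2 :
  is_improper_int_from f a l1 -> is_improper_int_from f a l2 -> l1 = l2.
Proof.
  intros [_ H1] [_ H2].
  apply Rminus_diag_uniq. apply Rabs_eq_0.
  apply Rle_antisym; [|apply Rabs_pos].
  apply Rnot_lt_le. intros Hp.
  set (e := Rabs (l1 - l2) / 2).
  assert (He : 0 < e) by (unfold e; lra).
  destruct (H1 e He) as [N1 HN1]. destruct (H2 e He) as [N2 HN2].
  set (B := Rmax a (Rmax N1 N2)).
  specialize (HN1 B ltac:(unfold B; apply Rle_trans with (Rmax N1 N2); [apply Rmax_l|apply Rmax_r])).
  specialize (HN2 B ltac:(unfold B; apply Rle_trans with (Rmax N1 N2); [apply Rmax_r|apply Rmax_r])).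
  assert (Rabs (l1 - l2) <= Rabs (Defs.RInt f a B - l2) + Rabs (Defs.RInt f a B - l1)).
  { replace (l1 - l2) with ((Defs.RInt f a B - l2) - (Defs.RInt f a B - l1)) by ring.
    unfold Rminus at 1. eapply Rle_trans; [apply Rabs_triang|rewrite Rabs_Ropp; lra]. }
  unfold e in *; lra.
Qed.

Lemma improper_unique f l1 l2 :
  is_improper_int f l1 -> is_improper_int f l2 -> l1 = l2.
Proof.
  intros [_ H1] [_ H2].
  apply Rminus_diag_uniq. apply Rabs_eq_0.
  apply Rle_antisym; [|apply Rabs_pos].
  apply Rnot_lt_le. intros Hp.
  set (e := Rabs (l1 - l2) / 2).
  assert (He : 0 < e) by (unfold e; lra).
  destruct (H1 e He) as [N1 HN1]. destruct (H2 e He) as [N2 HN2].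
  set (B := Rmax 0 (Rmax N1 N2)).
  assert (HB1 : N1 <= B) by (unfold B; apply Rle_trans with (Rmax N1 N2); [apply Rmax_l|apply Rmax_r]).
  assert (HB2 : N2 <= B) by (unfold B; apply Rle_trans with (Rmax N1 N2); [apply Rmax_r|apply Rmax_r]).
  specialize (HN1 (-B) B ltac:(lra) HB1).
  specialize (HN2 (-B) B ltac:(lra) HB2).
  assert (Rabs (l1 - l2) <= Rabs (Defs.RInt f (-B) B - l2) + Rabs (Defs.RInt f (-B) B - l1)).
  { replace (l1 - l2) with ((Defs.RInt f (-B) B - l2) - (Defs.RInt f (-B) B - l1)) by ring.
    unfold Rminus at 1. eapply Rle_trans; [apply Rabs_triang|rewrite Rabs_Ropp; lra]. }
  unfold e in *; lra.
Qed.

Lemma improper_int_eq f l : is_improper_int f l -> improper_int f = l.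
Proof.
  intros H. unfold improper_int.
  apply (improper_unique f); [|exact H].
  apply epsilon_spec. exists l; exact H.
Qed.

Lemma improper_int_from_eq f a l : is_improper_int_from f a l -> improper_int_from f a = l.
Proof.
  intros H. unfold improper_int_from.
  apply (improper_from_unique f a); [|exact H].
  apply epsilon_spec. exists l; exact H.
Qed.

Lemma ex_RInt_cont_open (f g : R -> R) a b : a <= b ->
  (forall z, a <= z <= b -> continuous g z) ->
  (forall z, a < z < b -> f z = g z) -> ex_RInt f a b.
Proof.
  intros Hab Hc He.
  apply ex_RInt_ext with g.
  { intros z Hz. rewrite Rmin_left in Hz by lra. rewrite Rmax_right in Hz by lra.
    symmetry; apply He; lra. }
  apply (@ex_RInt_continuous R_CompleteNormedModule). intros z Hz.
  rewrite Rmin_left in Hz by lra. rewrite Rmax_right in Hz by lra. apply Hc; lra.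
Qed.

Lemma ex_RInt_split_pt (f : R -> R) m :
  (forall a b, a <= b <= m -> ex_RInt f a b) ->
  (forall a b, m <= a <= b -> ex_RInt f a b) ->
  forall a b, a <= b -> ex_RInt f a b.
Proof.
  intros H1 H2 a b Hab.
  destruct (Rle_dec b m) as [Hb|Hb]. { apply H1; lra. }
  destruct (Rle_dec m a) as [Ha|Ha]. { apply H2; lra. }
  apply ex_RInt_Chasles with m; [apply H1|apply H2]; lra.
Qed.

Record Hyp (b x0 delta alpha : R) (h : R -> R) : Prop := mkHyp {
  H_x0 : 1 < x0; H_x0b : x0 < b; H_d0 : 0 < delta; H_d1 : delta < x0 - 1;
  H_d2 : delta < b - x0; H_cont : continuity h;
  H_per : forall t, h (t + ln b) = h t;
  H_pos : forall x, 1 <= x <= b -> x <> x0 -> 0 < h (ln x);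
  H_zero : h (ln x0) = 0;
  H_near : forall x, 0 < Rabs (x - x0) < delta -> h (ln x) = - / ln (Rabs (x - x0));
  H_alpha : 0 < alpha }.


Lemma exp_mono x y : x <= y -> exp x <= exp y.
Proof. intros [H|H]; [left; apply exp_increasing; exact H|subst; lra]. Qed.

Lemma Tpos b x0 delta alpha h : Hyp b x0 delta alpha h -> 0 < ln b.
Proof. intros H. rewrite <- ln_1. apply ln_increasing; pose proof (H_x0 _ _ _ _ _ H); pose proof (H_x0b _ _ _ _ _ H); lra. Qed.

Lemma per_nat b x0 delta alpha h : Hyp b x0 delta alpha h ->
  forall (n : nat) t, h (t + INR n * ln b) = h t.
Proof.
  intros H n. induction n as [|n IH]; intros t.
  - simpl. f_equal; ring.
  - rewrite S_INR. replace (t + (INR n + 1) * ln b) with ((t + INR n * ln b) + ln b) by ring.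
    rewrite (H_per _ _ _ _ _ H). apply IH.
Qed.

Lemma per_Z b x0 delta alpha h : Hyp b x0 delta alpha h ->
  forall (n : Z) t, h (t + IZR n * ln b) = h t.
Proof.
  intros H n t. destruct (Z.lt_ge_cases n 0) as [Hn|Hn].
  - assert (E : IZR n = - INR (Z.to_nat (- n))).
    { rewrite INR_IZR_INZ, Z2Nat.id by lia. rewrite opp_IZR. ring. }
    rewrite E. rewrite <- (per_nat _ _ _ _ _ H (Z.to_nat (-n)) (t + - INR (Z.to_nat (- n)) * ln b)).
    f_equal; ring.
  - assert (E : IZR n = INR (Z.to_nat n)).
    { rewrite INR_IZR_INZ, Z2Nat.id by lia. reflexivity. }
    rewrite E. apply (per_nat _ _ _ _ _ H).
Qed.

Lemma reduce T t : 0 < T -> exists n : Z, 0 <= t - IZR n * T < T.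
Proof.
  intros HT. destruct (archimed (t / T)) as [A1 A2].
  exists (up (t / T) - 1)%Z. rewrite minus_IZR.
  assert (E : t = (t / T) * T) by (field; lra).
  split.
  - assert (IZR (up (t/T)) - 1 <= t / T) by lra.
    apply Rmult_le_compat_r with (r := T) in H; [|lra]. lra.
  - assert (t / T < IZR (up (t/T)) - 1 + 1) by lra.
    apply Rmult_lt_compat_r with (r := T) in H; [|lra]. lra.
Qed.

Lemma h_nonneg b x0 delta alpha h : Hyp b x0 delta alpha h -> forall t, 0 <= h t.
Proof.
  intros H t. pose proof (Tpos _ _ _ _ _ H) as HT.
  destruct (reduce (ln b) t HT) as [n Hn].
  rewrite <- (per_Z _ _ _ _ _ H (- n) t). rewrite opp_IZR.
  replace (t + - IZR n * ln b) with (ln (exp (t - IZR n * ln b))) by (rewrite ln_exp; ring).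
  set (y := exp (t - IZR n * ln b)).
  destruct (Req_dec y x0) as [E|E].
  - rewrite E, (H_zero _ _ _ _ _ H). lra.
  - left. apply (H_pos _ _ _ _ _ H); [|exact E]. unfold y. split.
    + rewrite <- exp_0. apply exp_mono; lra.
    + apply Rle_trans with (exp (ln b)); [apply exp_mono; lra|].
      rewrite exp_ln; [lra|pose proof (H_x0 _ _ _ _ _ H); pose proof (H_x0b _ _ _ _ _ H); lra].
Qed.

Ltac hyps H := pose proof (H_x0 _ _ _ _ _ H); pose proof (H_x0b _ _ _ _ _ H);
  pose proof (H_d0 _ _ _ _ _ H); pose proof (H_d1 _ _ _ _ _ H); pose proof (H_d2 _ _ _ _ _ H);
  pose proof (H_alpha _ _ _ _ _ H).

Lemma h_bounded b x0 delta alpha h : Hyp b x0 delta alpha h ->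
  exists Hm, 0 < Hm /\ forall t, h t <= Hm.
Proof.
  intros H. pose proof (Tpos _ _ _ _ _ H) as HT.
  destruct (continuity_ab_maj h 0 (ln b) ltac:(lra)) as [m [Hm1 Hm2]].
  { intros c _. apply (H_cont _ _ _ _ _ H). }
  exists (Rabs (h m) + 1). split; [pose proof (Rabs_pos (h m)); lra|].
  intros t. destruct (reduce (ln b) t HT) as [n Hn].
  rewrite <- (per_Z _ _ _ _ _ H (- n) t). rewrite opp_IZR.
  pose proof (Hm1 (t + - IZR n * ln b) ltac:(lra)). pose proof (Rle_abs (h m)). lra.
Qed.

Lemma h_shift b x0 delta alpha h : Hyp b x0 delta alpha h ->
  forall (k : Z) t, h (t - IZR k * ln b) = h t.
Proof.
  intros H k t. rewrite <- (per_Z _ _ _ _ _ H k (t - IZR k * ln b)). f_equal; ring.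
Qed.

Definition rho0 b x0 := Rmin ((b - x0) / (2 * b)) ((x0 - 1) / 2).

Lemma rho0_pos b x0 delta alpha h : Hyp b x0 delta alpha h -> 0 < rho0 b x0.
Proof.
  intros H; hyps H. unfold rho0. apply Rmin_glb_lt.
  - apply Rdiv_lt_0_compat; lra.
  - lra.
Qed.

Lemma rho0_lt b x0 delta alpha h : Hyp b x0 delta alpha h -> rho0 b x0 < 1/2.
Proof.
  intros H; hyps H.
  assert (R1 : rho0 b x0 <= (b - x0) / (2 * b)) by apply Rmin_l.
  assert (R3 : (b - x0) / (2 * b) < 1/2).
  { apply Rmult_lt_reg_r with (2 * b); [lra|]. field_simplify; lra. }
  lra.
Qed.

Lemma G_pos b x0 delta alpha h : Hyp b x0 delta alpha h ->
  forall z, 1 - rho0 b x0 <= z <= b + rho0 b x0 -> z <> x0 -> 0 < h (ln z).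
Proof.
  intros H z Hz Hne; hyps H.
  assert (R1 : rho0 b x0 <= (b - x0) / (2 * b)) by apply Rmin_l.
  assert (R2 : rho0 b x0 <= (x0 - 1) / 2) by apply Rmin_r.
  assert (R3 : (b - x0) / (2 * b) < 1/2).
  { apply Rmult_lt_reg_r with (2 * b); [lra|]. field_simplify; lra. }
  assert (R4 : b * ((b - x0) / (2 * b)) = (b - x0)/2) by (field; lra).
  pose proof (rho0_pos _ _ _ _ _ H).
  destruct (Rlt_le_dec z 1) as [Hz1|Hz1].
  - rewrite <- (H_per _ _ _ _ _ H). rewrite <- ln_mult by lra.
    apply (H_pos _ _ _ _ _ H).
    + split; [|nra].
      assert (b * (1 - rho0 b x0) <= b * z) by (apply Rmult_le_compat_l; lra).
      assert (b * rho0 b x0 <= (b - x0)/2) by (rewrite <- R4; apply Rmult_le_compat_l; lra).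
      nra.
    + assert (b * (1 - rho0 b x0) <= b * z) by (apply Rmult_le_compat_l; lra).
      assert (b * rho0 b x0 <= (b - x0)/2) by (rewrite <- R4; apply Rmult_le_compat_l; lra).
      nra.
  - destruct (Rle_lt_dec z b) as [Hzb|Hzb].
    + apply (H_pos _ _ _ _ _ H); [lra|exact Hne].
    + replace (ln z) with (ln (z / b) + ln b).
      2:{ unfold Rdiv. rewrite ln_mult, ln_Rinv by (try apply Rinv_0_lt_compat; lra). ring. }
      rewrite (H_per _ _ _ _ _ H). apply (H_pos _ _ _ _ _ H).
      * split.
        -- apply Rmult_le_reg_r with b; [lra|]. field_simplify; lra.
        -- apply Rmult_le_reg_r with b; [lra|]. field_simplify; nra.
      * intros E. assert (z = x0 * b) by (rewrite <- E; field; lra).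
        assert (x0 * b > b + (x0 - 1)/2) by nra. lra.
Qed.

Lemma ln_cont_pt x : 0 < x -> continuity_pt ln x.
Proof.
  intros Hx. apply derivable_continuous_pt. exists (/ x). apply derivable_pt_lim_ln; exact Hx.
Qed.

Lemma G_cont b x0 delta alpha h : Hyp b x0 delta alpha h ->
  forall z, 0 < z -> continuity_pt (fun z => h (ln z)) z.
Proof.
  intros H z Hz. apply (continuity_pt_comp ln h z).
  - apply ln_cont_pt; exact Hz.
  - apply (H_cont _ _ _ _ _ H).
Qed.

Lemma G_unif b x0 delta alpha h : Hyp b x0 delta alpha h ->
  forall eps, 0 < eps -> exists s, 0 < s /\
   forall z z', 1 - rho0 b x0 <= z <= b + rho0 b x0 -> 1 - rho0 b x0 <= z' <= b + rho0 b x0 ->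
   Rabs (z - z') < s -> Rabs (h (ln z) - h (ln z')) < eps.
Proof.
  intros H eps He. hyps H. pose proof (rho0_pos _ _ _ _ _ H). pose proof (rho0_lt _ _ _ _ _ H).
  assert (R2 : rho0 b x0 <= (x0 - 1) / 2) by apply Rmin_r.
  destruct (Heine (fun z => h (ln z)) (fun c => 1 - rho0 b x0 <= c <= b + rho0 b x0)
     (compact_P3 _ _)) with (eps := mkposreal eps He) as [s Hs].
  { intros z Hz. cbv beta in Hz. apply (G_cont _ _ _ _ _ H). lra. }
  exists (pos s). split; [apply cond_pos|]. intros z z' Hz Hz' Hd. apply (Hs z z' Hz Hz' Hd).
Qed.

Lemma G_far_min b x0 delta alpha h : Hyp b x0 delta alpha h ->
  forall r, 0 < r -> r <= (x0 - 1) / 2 -> r <= (b - x0) / 2 ->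
  exists m, 0 < m /\ forall z, 1 - rho0 b x0 <= z <= b + rho0 b x0 -> r <= Rabs (z - x0) ->
    m <= h (ln z).
Proof.
  intros H r Hr Hr1 Hr2. hyps H. pose proof (rho0_pos _ _ _ _ _ H). pose proof (rho0_lt _ _ _ _ _ H).
  assert (R2 : rho0 b x0 <= (x0 - 1) / 2) by apply Rmin_r.
  destruct (continuity_ab_min (fun z => h (ln z)) (1 - rho0 b x0) (x0 - r) ltac:(lra)) as [m1 [Hm1 Hm1']].
  { intros c Hc. apply (G_cont _ _ _ _ _ H). lra. }
  destruct (continuity_ab_min (fun z => h (ln z)) (x0 + r) (b + rho0 b x0) ltac:(lra)) as [m2 [Hm2 Hm2']].
  { intros c Hc. apply (G_cont _ _ _ _ _ H). lra. }
  exists (Rmin (h (ln m1)) (h (ln m2))). split.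
  - apply Rmin_glb_lt; apply (G_pos _ _ _ _ _ H); lra.
  - intros z Hz Hzr. destruct (Rle_lt_dec z x0) as [Hzx|Hzx].
    + rewrite Rabs_left1 in Hzr by lra.
      eapply Rle_trans; [apply Rmin_l|]. apply Hm1; lra.
    + rewrite Rabs_right in Hzr by lra.
      eapply Rle_trans; [apply Rmin_r|]. apply Hm2; lra.
Qed.

Lemma ln_le_sub1 u : 0 < u -> ln u <= u - 1.
Proof.
  intros Hu. pose proof (exp_ineq1_le (ln u)). rewrite exp_ln in H by lra. lra.
Qed.

Lemma ln_ge_inv u : 0 < u -> 1 - / u <= ln u.
Proof.
  intros Hu. pose proof (ln_le_sub1 (/ u) ltac:(apply Rinv_0_lt_compat; lra)).
  rewrite ln_Rinv in H by lra. lra.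
Qed.

Lemma ln_near1 rho u : 0 <= rho <= 1/2 -> 1 - rho <= u <= 1 + rho -> Rabs (ln u) <= 2 * rho.
Proof.
  intros Hr Hu. pose proof (ln_le_sub1 u ltac:(lra)). pose proof (ln_ge_inv u ltac:(lra)).
  assert (1 - / u >= - (2 * rho)).
  { assert (/ u <= 1 + 2 * rho); [|lra].
    rewrite <- (Rinv_inv (1 + 2 * rho)). apply Rinv_le_contravar; [apply Rinv_0_lt_compat; lra|].
    apply Rmult_le_reg_r with (1 + 2 * rho); [lra|]. rewrite Rinv_l by lra. nra. }
  apply Rabs_le; lra.
Qed.

Lemma Rpower_pos x a : 0 < Rpower x a.
Proof. unfold Rpower; apply exp_pos. Qed.

Lemma Rpower_ge1 x a : 1 <= x -> 0 <= a -> 1 <= Rpower x a.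
Proof.
  intros Hx Ha. unfold Rpower. rewrite <- exp_0.
  destruct (Req_dec (a * ln x) 0) as [E|E]; [rewrite E; lra|].
  left. apply exp_increasing.
  assert (0 <= ln x) by (rewrite <- ln_1; destruct Hx as [Hx|Hx]; [left; apply ln_increasing; lra|subst; lra]).
  assert (0 <= a * ln x) by (apply Rmult_le_pos; lra). lra.
Qed.

Lemma ln_nonneg x : 1 <= x -> 0 <= ln x.
Proof. intros Hx. rewrite <- ln_1; destruct Hx as [Hx|Hx]; [left; apply ln_increasing; lra|subst; lra]. Qed.

Lemma ln_le_pow x beta : 0 < x -> 0 < beta -> ln x <= (2 / beta) * Rpower x (beta / 2).
Proof.
  intros Hx Hb. pose proof (ln_le_sub1 (Rpower x (beta/2)) (Rpower_pos _ _)).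
  rewrite ln_Rpower in H.
  apply Rmult_le_reg_l with (beta / 2); [lra|]. field_simplify; [|lra]. lra.
Qed.

Lemma Rpower_half x beta : 0 < x -> Rpower x (beta / 2) * Rpower x (- beta) = Rpower x (- (beta / 2)).
Proof. intros Hx. rewrite <- Rpower_plus. f_equal; field. Qed.

Definition ev (P : R -> Prop) := exists N, forall x, N <= x -> P x.

Lemma ev_and P Q : ev P -> ev Q -> ev (fun x => P x /\ Q x).
Proof.
  intros [N1 H1] [N2 H2]. exists (Rmax N1 N2). intros x Hx. split.
  - apply H1. eapply Rle_trans; [apply Rmax_l|exact Hx].
  - apply H2. eapply Rle_trans; [apply Rmax_r|exact Hx].
Qed.

Lemma ev_mono (P Q : R -> Prop) : (forall x, P x -> Q x) -> ev P -> ev Q.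
Proof. intros H [N HN]. exists N. intros; apply H, HN; auto. Qed.

Lemma ev_ge K : ev (fun x => K <= x).
Proof. exists K. auto. Qed.

Lemma ev_ln K : ev (fun x => K <= ln x).
Proof.
  exists (Rmax 1 (exp K)). intros x Hx.
  assert (1 <= x) by (eapply Rle_trans; [apply Rmax_l|exact Hx]).
  assert (exp K <= x) by (eapply Rle_trans; [apply Rmax_r|exact Hx]).
  rewrite <- (ln_exp K). destruct H0 as [H0|H0]; [left; apply ln_increasing; auto; apply exp_pos|rewrite H0; lra].
Qed.

Lemma ev_pow_small beta eta : 0 < beta -> 0 < eta -> ev (fun x => Rpower x (- beta) <= eta).
Proof.
  intros Hb He. destruct (ev_and _ _ (ev_ge 1) (ev_ln (- ln eta / beta))) as [N HN].
  exists N. intros x Hx. destruct (HN x Hx) as [H1 H2].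
  unfold Rpower. rewrite <- (exp_ln eta) by lra.
  assert (- beta * ln x <= ln eta).
  { apply Rmult_le_compat_l with (r := beta) in H2; [|lra].
    replace (beta * (- ln eta / beta)) with (- ln eta) in H2 by (field; lra). lra. }
  destruct H as [H|H]; [left; apply exp_increasing; auto|rewrite H; lra].
Qed.

Lemma ev_lnpow_small beta eta : 0 < beta -> 0 < eta -> ev (fun x => ln x * Rpower x (- beta) <= eta).
Proof.
  intros Hb He. destruct (ev_and _ _ (ev_ge 1) (ev_pow_small (beta/2) (eta * beta / 2) ltac:(lra) ltac:(nra))) as [N HN].
  exists N. intros x Hx. destruct (HN x Hx) as [H1 H2].
  pose proof (ln_le_pow x beta ltac:(lra) Hb).
  apply Rle_trans with ((2 / beta) * Rpower x (beta / 2) * Rpower x (- beta)).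
  { apply Rmult_le_compat_r; [left; apply Rpower_pos|exact H]. }
  rewrite Rmult_assoc, Rpower_half by lra.
  apply Rmult_le_reg_l with (beta / 2); [lra|]. field_simplify; [|lra]. lra.
Qed.

Lemma Rabs_le_inv' a b : Rabs a <= b -> - b <= a <= b.
Proof.
  intros H. pose proof (Rle_abs a). pose proof (Rle_abs (- a)). rewrite Rabs_Ropp in H1. lra.
Qed.

Lemma ln_le' x y : 0 < x -> x <= y -> ln x <= ln y.
Proof. intros Hx [H|H]; [left; apply ln_increasing; lra|subst; lra]. Qed.

Lemma decomp b x0 delta alpha h : Hyp b x0 delta alpha h ->
  forall x, 0 < x -> exists D, 0 < D /\ x / b < D <= x /\
    forall y, 0 < y -> h (ln y) = h (ln (y / D)).
Proof.
  intros H x Hx. hyps H. pose proof (Tpos _ _ _ _ _ H) as HT.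
  destruct (reduce (ln b) (ln x) HT) as [n Hn].
  exists (exp (IZR n * ln b)). split; [apply exp_pos|]. split; [split|].
  - assert (A : exp (ln x) < exp (IZR n * ln b + ln b)) by (apply exp_increasing; lra).
    rewrite exp_plus, !exp_ln in A by lra.
    apply Rmult_lt_reg_r with b; [lra|]. unfold Rdiv. rewrite Rmult_assoc, Rinv_l, Rmult_1_r by lra.
    exact A.
  - apply Rle_trans with (exp (ln x)); [apply exp_mono; lra|rewrite exp_ln; lra].
  - intros y Hy. unfold Rdiv. rewrite ln_mult, ln_Rinv, ln_exp by (try apply Rinv_0_lt_compat; try apply exp_pos; lra).
    rewrite <- (h_shift _ _ _ _ _ H n (ln y)). f_equal; ring.
Qed.

Lemma formula b x0 delta alpha h : Hyp b x0 delta alpha h ->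
  forall D y, 0 < D -> 0 < Rabs (y - x0 * D) -> Rabs (y - x0 * D) < delta * D ->
  h (ln (y / D)) = / (ln D - ln (Rabs (y - x0 * D))).
Proof.
  intros H D y HD H1 H2.
  assert (E : Rabs (y / D - x0) = Rabs (y - x0 * D) / D).
  { replace (y / D - x0) with ((y - x0 * D) / D) by (field; lra).
    unfold Rdiv. rewrite Rabs_mult, (Rabs_right (/ D)); [reflexivity|left; apply Rinv_0_lt_compat; lra]. }
  rewrite (H_near _ _ _ _ _ H).
  - rewrite E. unfold Rdiv. rewrite ln_mult, ln_Rinv by (try apply Rinv_0_lt_compat; lra).
    replace (ln (Rabs (y - x0 * D)) + - ln D) with (- (ln D - ln (Rabs (y - x0 * D)))) by ring.
    rewrite Rinv_opp. ring.
  - rewrite E. split.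
    + apply Rdiv_lt_0_compat; lra.
    + apply Rmult_lt_reg_r with D; [lra|]. unfold Rdiv. rewrite Rmult_assoc, Rinv_l, Rmult_1_r by lra. lra.
Qed.

Lemma alg_nearfar L0 l e c : 1 <= L0 -> 0 < e <= 1/2 -> Rabs l <= e / 4 -> c = / L0 ->
  / (L0 - l) <= (1 + e) * c /\ (1 - e) * c <= / (L0 - l).
Proof.
  intros HL He Hl Hc. subst c. apply Rabs_le_inv' in Hl.
  assert (0 < L0 - l) by lra.
  split.
  - rewrite <- (Rmult_1_l (/ (L0 - l))). apply Rmult_le_reg_r with (L0 * (L0 - l)); [nra|].
    field_simplify; [|lra|lra]. nra.
  - apply Rmult_le_reg_r with (L0 * (L0 - l)); [nra|].
    field_simplify; [|lra|lra]. nra.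
Qed.

Lemma alg_upper L Lam e : 0 < L -> 0 < e <= 1/2 -> L * (1 - e / 2) <= Lam -> / Lam <= (1 + e) * / L.
Proof.
  intros HL He H. assert (0 < Lam) by nra.
  assert (L <= (1+e) * (L*(1-e/2))).
  { assert (0 <= L * (e/2 - e*e/2)) by (apply Rmult_le_pos; nra). nra. }
  assert ((1+e) * (L*(1-e/2)) <= (1+e) * Lam) by (apply Rmult_le_compat_l; lra).
  apply Rmult_le_reg_r with (L * Lam); [nra|]. field_simplify; [|lra|lra]. lra.
Qed.

Lemma alg_lower L Lam e : 0 < L -> 0 < e <= 1/2 -> 0 < Lam -> Lam <= (1 + e) * L -> (1 - e) * / L <= / Lam.
Proof.
  intros HL He H0 H.
  assert ((1-e) * Lam <= (1-e) * ((1+e) * L)) by (apply Rmult_le_compat_l; lra).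
  assert ((1-e) * ((1+e) * L) <= L).
  { assert (0 <= L * (e*e)) by (apply Rmult_le_pos; nra). nra. }
  apply Rmult_le_reg_r with (L * Lam); [nra|]. field_simplify; [|lra|lra]. lra.
Qed.

Lemma ln3_ge1 : 1 <= ln 3.
Proof.
  rewrite <- (ln_exp 1) at 1. apply ln_le'; [apply exp_pos|]. apply exp_le_3.
Qed.

Lemma Rpower_mul_x x a : 0 < x -> Rpower x (- a) * x = Rpower x (1 - a).
Proof. intros Hx. rewrite <- (Rpower_1 x) at 2 by lra. rewrite <- Rpower_plus. f_equal; ring. Qed.

Lemma g_flat b x0 delta alpha h : Hyp b x0 delta alpha h ->
  forall e, 0 < e <= 1/2 -> exists th, 0 < th < 1/8 /\ ev (fun x =>
   exists c q, / ln x <= c /\ forall y, x - Rpower x th <= y <= x + 1 ->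
     h (ln y) <= (1 + e) * c /\ (e <= Rabs (y - q) -> (1 - e) * c <= h (ln y))).
Proof.
  intros H e He. hyps H. pose proof (Tpos _ _ _ _ _ H) as HT.
  pose proof (rho0_pos _ _ _ _ _ H). pose proof (rho0_lt _ _ _ _ _ H).
  set (r := Rmin (delta / 2) (1/3)).
  assert (Hr1 : r <= delta / 2) by apply Rmin_l.
  assert (Hr2 : r <= 1/3) by apply Rmin_r.
  assert (Hr0 : 0 < r) by (apply Rmin_glb_lt; lra).
  destruct (G_far_min _ _ _ _ _ H r Hr0 ltac:(lra) ltac:(lra)) as [m [Hm Hmin]].
  destruct (G_unif _ _ _ _ _ H (e * m) ltac:(nra)) as [s [Hs Hunif]].
  set (th := e / 8).
  exists th. split; [unfold th; lra|].
  set (w0 := Rmin (rho0 b x0) (Rmin (r / 2) (s / 2))).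
  assert (Hw1 : w0 <= rho0 b x0) by apply Rmin_l.
  assert (Hw2 : w0 <= r / 2) by (eapply Rle_trans; [apply Rmin_r|apply Rmin_l]).
  assert (Hw3 : w0 <= s / 2) by (eapply Rle_trans; [apply Rmin_r|apply Rmin_r]).
  assert (Hw0 : 0 < w0) by (unfold w0; apply Rmin_glb_lt; [lra|apply Rmin_glb_lt; lra]).
  assert (Hth : 0 < th) by (unfold th; lra).
  pose proof (ev_and _ _ (ev_ge 2) (ev_and _ _ (ev_pow_small (1 - th) (w0 / b) ltac:(unfold th; lra) ltac:(apply Rdiv_lt_0_compat; lra))
     (ev_and _ _ (ev_pow_small th (e / 8) Hth ltac:(lra))
     (ev_and _ _ (ev_pow_small (1 - 2 * th) (delta / (4 * b)) ltac:(unfold th; lra) ltac:(apply Rdiv_lt_0_compat; lra))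
     (ev_and _ _ (ev_ln (4 * ln (2 * b) / e)) (ev_and _ _ (ev_ln (- ln e / e)) (ev_ln (/ m)))))))) as Hev.
  revert Hev. apply ev_mono. intros x [Hx2 [C2 [C3 [C4 [C5 [C6 C7]]]]]].
  assert (Hx0' : 0 < x) by lra.
  assert (HL : 0 < ln x) by (rewrite <- ln_1; apply ln_increasing; lra).
  set (P := Rpower x th).
  assert (HP1 : 1 <= P) by (apply Rpower_ge1; lra).
  assert (EP1 : Rpower x (- (1 - th)) * x = P) by (unfold P; rewrite Rpower_mul_x by lra; f_equal; ring).
  assert (EP2 : Rpower x (- (1 - 2 * th)) * x = P * P).
  { unfold P. rewrite Rpower_mul_x by lra. rewrite <- Rpower_plus. f_equal; ring. }
  assert (EP3 : Rpower x (- th) * P = 1).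
  { unfold P. rewrite <- Rpower_plus. replace (- th + th) with 0 by ring. apply Rpower_O; lra. }
  assert (lnP : ln P = th * ln x) by (unfold P; apply ln_Rpower).
  destruct (decomp _ _ _ _ _ H x Hx0') as [D [HD [[HDx1 HDx2] Hsh]]].
  assert (HxD : x < b * D).
  { apply Rmult_lt_reg_r with (/ b); [apply Rinv_0_lt_compat; lra|].
    replace (b * D * / b) with D by (field; lra). exact HDx1. }
  assert (HPx : b * P <= w0 * x).
  { rewrite <- EP1. apply Rmult_le_reg_r with (/ b); [apply Rinv_0_lt_compat; lra|].
    replace (b * (Rpower x (- (1 - th)) * x) * / b) with (Rpower x (- (1 - th)) * x) by (field; lra).
    replace (w0 * x * / b) with ((w0 / b) * x) by (field; lra).
    apply Rmult_le_compat_r; lra. }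
  assert (HPD : P <= w0 * D).
  { apply Rmult_le_reg_l with b; [lra|]. nra. }
  assert (Hwin : forall y, x - P <= y <= x + 1 -> 0 < y /\ Rabs (y - x) <= P).
  { intros y Hy. split; [nra|]. apply Rabs_le; lra. }
  set (z := x / D).
  assert (Hz1 : 1 <= z) by (unfold z; apply Rmult_le_reg_r with D; [lra|]; field_simplify; lra).
  assert (Hz2 : z <= b) by (unfold z; apply Rmult_le_reg_r with D; [lra|]; field_simplify; lra).
  assert (Hhx : h (ln x) = h (ln z)) by (apply Hsh; lra).
  destruct (Rle_lt_dec r (Rabs (z - x0))) as [Far|Near].
  -
    assert (Gz : m <= h (ln z)) by (apply Hmin; lra).
    exists (h (ln x)), (x + 3). split.
    { rewrite Hhx. apply Rle_trans with m; [|exact Gz].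
      rewrite <- (Rinv_inv m). apply Rinv_le_contravar; [apply Rinv_0_lt_compat; lra|exact C7]. }
    intros y Hy. destruct (Hwin y Hy) as [Hy0 Hyx].
    rewrite (Hsh y Hy0), Hhx.
    assert (Hzy : Rabs (z - y / D) <= w0).
    { replace (z - y / D) with ((x - y) / D) by (unfold z; field; lra).
      unfold Rdiv. rewrite Rabs_mult, (Rabs_right (/ D)) by (left; apply Rinv_0_lt_compat; lra).
      rewrite Rabs_minus_sym. apply Rmult_le_reg_r with D; [lra|].
      rewrite Rmult_assoc, Rinv_l, Rmult_1_r by lra. lra. }
    apply Rabs_le_inv' in Hzy.
    assert (U : Rabs (h (ln z) - h (ln (y / D))) < e * m).
    { apply Hunif; try lra. apply Rabs_def1; lra. }
    apply Rabs_def2 in U.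
    assert (e * m <= e * h (ln z)) by (apply Rmult_le_compat_l; lra).
    split; [lra|intros _; lra].
  -
    set (p := x0 * D).
    assert (Edz : Rabs (x - p) = D * Rabs (z - x0)).
    { unfold p. replace (x - x0 * D) with (D * (z - x0)) by (unfold z; field; lra).
      rewrite Rabs_mult, Rabs_right by lra. reflexivity. }
    set (d := Rabs (x - p)).
    destruct (Rle_lt_dec (P * P) d) as [NF|NN].
    +
      assert (Hd1' : 1 <= d) by nra.
      assert (HdD : d < r * D) by (unfold d; rewrite Edz; nra).
      set (L0 := ln D - ln d).
      assert (EL0 : L0 = ln (/ Rabs (z - x0))).
      { unfold L0, d. rewrite Edz. rewrite ln_Rinv by (apply Rabs_pos_lt; intro E; rewrite E, Rabs_R0 in Edz; fold d in Edz; lra).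
        rewrite ln_mult; [ring|lra|]. apply Rabs_pos_lt; intro E; rewrite E, Rabs_R0 in Edz; fold d in Edz; lra. }
      assert (HzP : 0 < Rabs (z - x0)) by (apply Rabs_pos_lt; intro E; rewrite E, Rabs_R0 in Edz; fold d in Edz; lra).
      assert (HL0 : 1 <= L0).
      { rewrite EL0. apply Rle_trans with (ln 3); [apply ln3_ge1|]. apply ln_le'; [lra|].
        rewrite <- (Rinv_inv 3). apply Rinv_le_contravar; lra. }
      assert (Hc : h (ln x) = / L0).
      { rewrite (Hsh x Hx0'). apply (formula _ _ _ _ _ H); fold p; fold d; nra. }
      exists (h (ln x)), (x + 3). split.
      { rewrite Hc. apply Rinv_le_contravar; [lra|]. unfold L0.
        assert (ln D <= ln x) by (apply ln_le'; lra). assert (0 <= ln d) by (apply ln_nonneg; lra). lra. }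
      intros y Hy. destruct (Hwin y Hy) as [Hy0 Hyx].
      set (rho := P / d).
      assert (Hrho : rho <= e / 8).
      { unfold rho. apply Rle_trans with (/ P).
        - unfold Rdiv. apply Rmult_le_reg_r with (d * P); [nra|]. field_simplify; nra.
        - assert (Rpower x (- th) = / P) by (field_simplify_eq; [lra|lra]). lra. }
      assert (Hrho0 : 0 <= rho) by (unfold rho; apply Rmult_le_pos; [lra|left; apply Rinv_0_lt_compat; lra]).
      assert (Hyp1 : d - P <= Rabs (y - p) <= d + P).
      { unfold d. replace (y - p) with ((x - p) + (y - x)) by ring. split.
        - pose proof (Rabs_triang_inv (x - p) (x - y)) as Tri. replace (x - p - (x - y)) with ((x - p) + (y - x)) in Tri by ring.
          rewrite Rabs_minus_sym in Hyx. lra.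
        - eapply Rle_trans; [apply Rabs_triang|lra]. }
      set (u := Rabs (y - p) / d).
      assert (Hu : 1 - rho <= u <= 1 + rho).
      { unfold u, rho. split; apply Rmult_le_reg_r with d; try lra; field_simplify; lra. }
      assert (Hlu : Rabs (ln u) <= e / 4).
      { pose proof (ln_near1 rho u ltac:(lra) Hu). lra. }
      assert (Eyp : Rabs (y - p) = d * u) by (unfold u; field; lra).
      assert (Hgy : h (ln y) = / (L0 - ln u)).
      { rewrite (Hsh y Hy0). rewrite (formula _ _ _ _ _ H); fold p.
        - unfold L0. rewrite Eyp, ln_mult by lra. f_equal; ring.
        - lra.
        - rewrite Eyp; apply Rmult_lt_0_compat; lra.
        - assert (EPr : P = rho * d) by (unfold rho; field; lra).
          assert (rho * d <= (1/16) * d) by (apply Rmult_le_compat_r; lra).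
          assert (r * D <= (delta / 2) * D) by (apply Rmult_le_compat_r; lra).
          lra. }
      rewrite Hgy, Hc.
      destruct (alg_nearfar L0 (ln u) e (/ L0) HL0 He Hlu eq_refl). split; [lra|intros _; lra].
    +
      exists (/ ln x), p. split; [lra|].
      intros y Hy. destruct (Hwin y Hy) as [Hy0 Hyx].
      assert (Hyp2 : Rabs (y - p) <= 2 * (P * P)).
      { replace (y - p) with ((x - p) + (y - x)) by ring.
        eapply Rle_trans; [apply Rabs_triang|]. fold d. nra. }
      assert (HyD : Rabs (y - p) < delta * D).
      { assert (b * (P * P) <= delta / 4 * x).
        { rewrite <- EP2. apply Rmult_le_reg_r with (/ b); [apply Rinv_0_lt_compat; lra|].
          replace (b * (Rpower x (- (1 - 2 * th)) * x) * / b) with (Rpower x (- (1 - 2 * th)) * x) by (field; lra).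
          replace (delta / 4 * x * / b) with ((delta / (4 * b)) * x) by (field; lra).
          apply Rmult_le_compat_r; lra. }
        nra. }
      assert (Hup : forall y', 0 < Rabs (y' - p) -> Rabs (y' - p) <= 2 * (P * P) ->
                 ln x * (1 - e / 2) <= ln D - ln (Rabs (y' - p))).
      { intros y' Hp1 Hp2.
        assert (ln (Rabs (y' - p)) <= ln 2 + 2 * (th * ln x)).
        { rewrite <- lnP. replace (2 * ln P) with (ln P + ln P) by ring.
          rewrite <- !ln_mult by lra. apply ln_le'; lra. }
        assert (ln x - ln b <= ln D).
        { unfold Rminus. rewrite <- ln_Rinv by lra. rewrite <- ln_mult by (try apply Rinv_0_lt_compat; lra).
          apply ln_le'; [apply Rmult_lt_0_compat; [lra|apply Rinv_0_lt_compat; lra]|lra]. }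
        assert (ln (2 * b) = ln 2 + ln b) by (apply ln_mult; lra).
        assert (e * ln x >= 4 * ln (2 * b)).
        { apply Rmult_le_compat_l with (r := e) in C5; [|lra].
          replace (e * (4 * ln (2 * b) / e)) with (4 * ln (2 * b)) in C5 by (field; lra). lra. }
        unfold th in *. nra. }
      split.
      * destruct (Req_dec (Rabs (y - p)) 0) as [E0|E0].
        -- assert (y = p) by (destruct (Rcase_abs (y - p)); [rewrite Rabs_left in E0 by lra|rewrite Rabs_right in E0 by lra]; lra).
           rewrite (Hsh y Hy0). replace (y / D) with x0 by (subst y; unfold p; field; lra).
           rewrite (H_zero _ _ _ _ _ H). apply Rmult_le_pos; [lra|left; apply Rinv_0_lt_compat; lra].
        -- assert (Hp1 : 0 < Rabs (y - p)) by (pose proof (Rabs_pos (y - p)); lra).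
           rewrite (Hsh y Hy0), (formula _ _ _ _ _ H) by (fold p; lra).
           apply (alg_upper (ln x) _ e HL He). apply Hup; lra.
      * intros Hq.
        assert (Hp1 : 0 < Rabs (y - p)) by lra.
        rewrite (Hsh y Hy0), (formula _ _ _ _ _ H) by (fold p; lra).
        apply (alg_lower (ln x) _ e HL He); fold p.
        -- pose proof (Hup y Hp1 Hyp2). assert (0 < ln x * (1 - e/2)) by (apply Rmult_lt_0_compat; lra). lra.
        -- assert (ln e <= ln (Rabs (y - p))) by (apply ln_le'; lra).
           assert (ln D <= ln x) by (apply ln_le'; lra).
           assert (- ln e <= e * ln x).
           { apply Rmult_le_compat_l with (r := e) in C6; [|lra].
             replace (e * (- ln e / e)) with (- ln e) in C6 by (field; lra). lra. }
           lra.
Qed.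

Lemma exp_upper t : 0 <= t <= 1/2 -> exp t <= 1 + 2 * t.
Proof.
  intros Ht. pose proof (exp_ineq1_le (- t)).
  assert (exp t * exp (- t) = 1) by (rewrite <- exp_plus; replace (t + - t) with 0 by ring; apply exp_0).
  assert (0 < exp t) by apply exp_pos.
  assert (exp t * (1 - t) <= 1) by (rewrite <- H0; apply Rmult_le_compat_l; lra).
  nra.
Qed.

Lemma exp_near t : Rabs t <= 1/2 -> 1 - Rabs t <= exp t <= 1 + 2 * Rabs t.
Proof.
  intros Ht. pose proof (exp_ineq1_le t). pose proof (Rle_abs t). pose proof (Rle_abs (- t)). rewrite Rabs_Ropp in H1.
  split; [lra|].
  destruct (Rle_dec 0 t).
  - rewrite Rabs_right by lra. apply exp_upper. rewrite Rabs_right in Ht by lra. lra.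
  - assert (exp t <= exp 0) by (apply exp_mono; lra). rewrite exp_0 in H2. pose proof (Rabs_pos t). lra.
Qed.

Lemma pow_ratio a x y eta : 0 < x -> 0 < y -> 0 <= eta <= 1/2 -> 1 - eta <= y / x <= 1 + eta ->
  2 * Rabs a * eta <= 1/4 ->
  (1 - 2 * Rabs a * eta) * Rpower x a <= Rpower y a <= (1 + 4 * Rabs a * eta) * Rpower x a.
Proof.
  intros Hx Hy He Hyx Ha.
  assert (E : Rpower y a = Rpower x a * Rpower (y / x) a).
  { rewrite Rpower_mult_distr by (try apply Rdiv_lt_0_compat; lra). f_equal; field; lra. }
  pose proof (ln_near1 eta (y / x) He Hyx) as Hl.
  assert (Ht : Rabs (a * ln (y / x)) <= 2 * Rabs a * eta).
  { rewrite Rabs_mult. replace (2 * Rabs a * eta) with (Rabs a * (2 * eta)) by ring. apply Rmult_le_compat_l; [apply Rabs_pos|]. lra. }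
  destruct (exp_near (a * ln (y / x)) ltac:(lra)).
  rewrite E. replace (Rpower (y/x) a) with (exp (a * ln (y/x))) by reflexivity. pose proof (Rpower_pos x a).
  rewrite (Rmult_comm (Rpower x a)).
  split; apply Rmult_le_compat_r; lra.
Qed.

Lemma phi_eq alpha h y : 1 <= y -> phi_fun alpha h y = Rpower y (- alpha - 1) * h (ln y).
Proof. intros Hy. unfold phi_fun. destruct (Rle_dec 1 y); [reflexivity|lra]. Qed.

Lemma f_flat b x0 delta alpha h : Hyp b x0 delta alpha h ->
  forall e, 0 < e <= 1/2 -> exists th, 0 < th < 1/8 /\ ev (fun x =>
   2 <= x /\ exists c q, Rpower x (- alpha - 1) * / ln x <= c /\ forall y, x - Rpower x th <= y <= x + 1 ->
     phi_fun alpha h y <= (1 + e) * c /\ (e <= Rabs (y - q) -> (1 - e) * c <= phi_fun alpha h y)).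
Proof.
  intros H e He. hyps H.
  destruct (g_flat _ _ _ _ _ H (e / 3) ltac:(lra)) as [th [Hth Hev]].
  exists th. split; [exact Hth|].
  set (a := - alpha - 1).
  assert (Ha : Rabs a = alpha + 1) by (unfold a; rewrite Rabs_left by lra; ring).
  set (eta := e / (12 * (alpha + 1))).
  assert (Heta : 0 < eta) by (unfold eta; apply Rdiv_lt_0_compat; lra).
  assert (Heta2 : 4 * Rabs a * eta = e / 3) by (rewrite Ha; unfold eta; field; lra).
  assert (Heta3 : eta <= 1/24).
  { unfold eta. apply Rmult_le_reg_r with (12 * (alpha + 1)); [lra|]. field_simplify; lra. }
  pose proof (ev_and _ _ Hev (ev_and _ _ (ev_ge (Rmax 2 (/ eta))) (ev_pow_small (1 - th) eta ltac:(lra) Heta))) as Hev2.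
  revert Hev2. apply ev_mono. intros x [[c [q [Hc Hb]]] [Hx1 Hx2]].
  assert (Hx : 2 <= x) by (eapply Rle_trans; [apply Rmax_l|exact Hx1]).
  assert (Hxe : / eta <= x) by (eapply Rle_trans; [apply Rmax_r|exact Hx1]).
  split; [exact Hx|].
  assert (HL : 0 < ln x) by (rewrite <- ln_1; apply ln_increasing; lra).
  assert (Hc0 : 0 < c) by (apply Rlt_le_trans with (/ ln x); [apply Rinv_0_lt_compat|]; lra).
  exists (Rpower x a * c), q. split.
  { apply Rmult_le_compat_l; [left; apply Rpower_pos|exact Hc]. }
  assert (EP1 : Rpower x (- (1 - th)) * x = Rpower x th) by (rewrite Rpower_mul_x by lra; f_equal; ring).
  assert (HPx : Rpower x th <= eta * x) by (rewrite <- EP1; apply Rmult_le_compat_r; lra).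
  assert (Hx1e : 1 <= eta * x).
  { apply Rmult_le_reg_l with (/ eta); [apply Rinv_0_lt_compat; lra|].
    rewrite <- Rmult_assoc, Rinv_l, Rmult_1_l, Rmult_1_r by lra. exact Hxe. }
  intros y Hy. destruct (Hb y Hy) as [Hup Hlo].
  assert (Hy1 : 1 <= y) by nra.
  assert (Hr : 1 - eta <= y / x <= 1 + eta).
  { split; apply Rmult_le_reg_r with x; try lra; field_simplify; lra. }
  destruct (pow_ratio a x y eta ltac:(lra) ltac:(lra) ltac:(lra) Hr ltac:(lra)) as [P1 P2].
  pose proof (Rpower_pos x a). pose proof (Rpower_pos y a).
  assert (E2 : 2 * Rabs a * eta = e / 6) by lra. rewrite E2 in P1. rewrite Heta2 in P2.
  assert (P1' : (1 - e/3) * Rpower x a <= Rpower y a) by (apply Rle_trans with ((1 - e/6) * Rpower x a); [apply Rmult_le_compat_r; lra | exact P1]).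
  pose proof (h_nonneg _ _ _ _ _ H (ln y)) as Hg.
  rewrite phi_eq by exact Hy1. fold a.
  split.
  - apply Rle_trans with (((1 + e/3) * Rpower x a) * ((1 + e / 3) * c)).
    + apply Rmult_le_compat; try lra. 
    + assert ((1 + e/3) * (1 + e/3) <= 1 + e) by nra.
      assert (0 < Rpower x a * c) by (apply Rmult_lt_0_compat; lra).
      replace ((1 + e / 3) * Rpower x a * ((1 + e / 3) * c)) with (((1 + e/3) * (1 + e/3)) * (Rpower x a * c)) by ring.
      apply Rmult_le_compat_r; lra.
  - intros Hq. specialize (Hlo ltac:(lra)).
    apply Rle_trans with (((1 - e/3) * Rpower x a) * ((1 - e / 3) * c)).
    + assert (1 - e <= (1 - e/3) * (1 - e/3)) by nra.
      assert (0 < Rpower x a * c) by (apply Rmult_lt_0_compat; lra).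
      replace ((1 - e / 3) * Rpower x a * ((1 - e / 3) * c)) with (((1 - e/3) * (1 - e/3)) * (Rpower x a * c)) by ring.
      apply Rmult_le_compat_r; lra.
    + apply Rmult_le_compat; try lra.
      * apply Rmult_le_pos; lra.
      * apply Rmult_le_pos; lra.
Qed.

Definition Fc alpha h y := Rpower y (- alpha - 1) * h (ln y).

Lemma Rpower_cont_pt y a : 0 < y -> continuity_pt (fun y => Rpower y a) y.
Proof.
  intros Hy. apply derivable_continuous_pt. exists (a * Rpower y (a - 1)).
  apply derivable_pt_lim_power; exact Hy.
Qed.

Lemma Fc_cont_pt b x0 delta alpha h : Hyp b x0 delta alpha h ->
  forall y, 0 < y -> continuity_pt (Fc alpha h) y.
Proof.
  intros H y Hy. unfold Fc. apply continuity_pt_mult.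
  - apply Rpower_cont_pt; exact Hy.
  - apply (G_cont _ _ _ _ _ H); exact Hy.
Qed.

Lemma Fc_cont b x0 delta alpha h : Hyp b x0 delta alpha h ->
  forall y, 0 < y -> continuous (Fc alpha h) y.
Proof. intros H y Hy. apply continuity_pt_filterlim. apply (Fc_cont_pt _ _ _ _ _ H); exact Hy. Qed.

Lemma ex_RInt_split3 (f : R -> R) m1 m2 : m1 <= m2 ->
  (forall a b, a <= b <= m1 -> ex_RInt f a b) ->
  (forall a b, m1 <= a -> a <= b -> b <= m2 -> ex_RInt f a b) ->
  (forall a b, m2 <= a <= b -> ex_RInt f a b) ->
  forall a b, a <= b -> ex_RInt f a b.
Proof.
  intros Hm H1 H2 H3 a b Hab.
  destruct (Rle_dec b m1). { apply H1; lra. }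
  destruct (Rle_dec m2 a). { apply H3; lra. }
  destruct (Rle_dec m1 a); destruct (Rle_dec b m2).
  - apply H2; lra.
  - apply ex_RInt_Chasles with m2; [apply H2|apply H3]; lra.
  - apply ex_RInt_Chasles with m1; [apply H1|apply H2]; lra.
  - apply ex_RInt_Chasles with m1; [apply H1; lra|].
    apply ex_RInt_Chasles with m2; [apply H2|apply H3]; lra.
Qed.

Lemma ex_RInt_zero_open (f : R -> R) a b : a <= b -> (forall z, a < z < b -> f z = 0) -> ex_RInt f a b.
Proof.
  intros Hab Hz. apply (ex_RInt_cont_open f (fun _ => 0)); auto.
  intros; apply continuous_const.
Qed.

Lemma phi_int b x0 delta alpha h : Hyp b x0 delta alpha h ->
  forall a c, a <= c -> ex_RInt (phi_fun alpha h) a c.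
Proof.
  intros H. apply (ex_RInt_split_pt _ 1).
  - intros a c Hac. apply ex_RInt_zero_open; [lra|]. intros z Hz. unfold phi_fun.
    destruct (Rle_dec 1 z); [lra|reflexivity].
  - intros a c Hac. apply (ex_RInt_cont_open _ (Fc alpha h)); [lra| |].
    + intros z Hz. apply (Fc_cont _ _ _ _ _ H); lra.
    + intros z Hz. apply phi_eq; lra.
Qed.

Lemma conv_int b x0 delta alpha h : Hyp b x0 delta alpha h ->
  forall x a c, a <= c -> ex_RInt (fun u => phi_fun alpha h (x - u) * phi_fun alpha h u) a c.
Proof.
  intros H x. apply (ex_RInt_split3 _ 1 (Rmax 1 (x - 1)) (Rmax_l _ _)).
  - intros a c Hac. apply ex_RInt_zero_open; [lra|]. intros z Hz. unfold phi_fun at 2.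
    destruct (Rle_dec 1 z); [lra|ring].
  - intros a c Ha1 Hac Hc2. destruct (Req_dec a c) as [E|E]. { subst c. apply ex_RInt_point. }
    assert (Hm : Rmax 1 (x - 1) = x - 1).
    { unfold Rmax in *. destruct (Rle_dec 1 (x - 1)); [reflexivity|lra]. }
    rewrite Hm in Hc2.
    apply (ex_RInt_cont_open _ (fun u => Fc alpha h (x - u) * Fc alpha h u)); [lra| |].
    + intros z Hz.
      apply (continuous_mult (fun u => Fc alpha h (x - u)) (Fc alpha h)).
      * apply (continuous_comp (fun u => x - u) (Fc alpha h)).
        -- apply (continuous_minus (fun _ => x) (fun u => u)); [apply continuous_const|apply continuous_id].
        -- apply (Fc_cont _ _ _ _ _ H); lra.
      * apply (Fc_cont _ _ _ _ _ H); lra.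
    + intros z Hz. rewrite !phi_eq by lra. reflexivity.
  - intros a c Hac. apply ex_RInt_zero_open; [lra|]. intros z Hz. unfold phi_fun at 1.
    assert (x - z < 1) by (pose proof (Rmax_r 1 (x - 1)); lra).
    destruct (Rle_dec 1 (x - z)); [lra|ring].
Qed.

Lemma Chasles_R (f : R -> R) a b c : ex_RInt f a b -> ex_RInt f b c -> RInt f a b + RInt f b c = RInt f a c.
Proof. intros H1 H2. apply (RInt_Chasles f a b c H1 H2). Qed.

Lemma RInt_scal_R (f : R -> R) k a b : ex_RInt f a b -> (RInt (fun x => k * f x) a b : R) = k * RInt f a b.
Proof. intros H. apply (RInt_scal f a b k H). Qed.

Lemma ex_RInt_scal_R (f : R -> R) k a b : ex_RInt f a b -> ex_RInt (fun x => k * f x) a b.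
Proof. intros H. apply (ex_RInt_scal f a b k H). Qed.

Lemma RInt_const_R k a b : (RInt (fun _ => k) a b : R) = (b - a) * k.
Proof. rewrite RInt_const. reflexivity. Qed.

Lemma RInt_zero_open (f : R -> R) a c : a <= c -> (forall z, a < z < c -> f z = 0) -> (RInt f a c : R) = 0.
Proof.
  intros Hac Hz. assert (E : (RInt f a c : R) = RInt (fun _ => 0) a c).
  { apply RInt_ext. intros z Hz'. rewrite Rmin_left in Hz' by lra. rewrite Rmax_right in Hz' by lra. apply Hz; lra. }
  rewrite E, RInt_const_R. ring.
Qed.

Lemma RInt_le_const (f : R -> R) a c K : a <= c -> ex_RInt f a c -> (forall z, a < z < c -> f z <= K) ->
  RInt f a c <= K * (c - a).
Proof.
  intros Hac Hf Hz. apply Rle_trans with (RInt (fun _ => K) a c).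
  - apply RInt_le; auto. apply ex_RInt_const.
  - rewrite RInt_const_R. right; ring.
Qed.

Ltac dmm := unfold Rmin, Rmax in *;
  repeat match goal with
  | |- context [Rle_dec ?x ?y] => destruct (Rle_dec x y) as [?|?%Rnot_le_lt]
  | H : context [Rle_dec ?x ?y] |- _ => destruct (Rle_dec x y) as [?|?%Rnot_le_lt]
  end.

Lemma split_lower (w F : R -> R) a c q e W0 Lb : a <= c -> 0 < e -> 0 <= Lb -> 0 <= W0 ->
  (forall a' c', a <= a' -> a' <= c' -> c' <= c -> ex_RInt w a' c' /\ ex_RInt (fun u => w u * F u) a' c') ->
  (forall u, a < u < c -> 0 <= w u <= W0 /\ 0 <= F u) ->
  (forall u, a < u < c -> e <= Rabs (u - q) -> Lb <= F u) ->
  Lb * (RInt w a c - 2 * e * W0) <= RInt (fun u => w u * F u) a c.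
Proof.
  intros Hac He HL HW0 Hint Hpos Hlow.
  set (m1 := Rmin c (Rmax a (q - e))).
  set (m2 := Rmin c (Rmax m1 (q + e))).
  assert (Hm1 : a <= m1 <= c).
  { unfold m1. split; [apply Rmin_glb; [lra|apply Rmax_l]|apply Rmin_l]. }
  assert (Hm2 : m1 <= m2 <= c).
  { unfold m2. split; [apply Rmin_glb; [lra|apply Rmax_l]|apply Rmin_l]. }
  assert (Hd : m2 - m1 <= 2 * e).
  { clear Hm1 Hm2. unfold m2, m1. dmm; lra. }
  destruct (Hint a m1) as [Iw1 Iwf1]; try lra.
  destruct (Hint m1 m2) as [Iw2 Iwf2]; try lra.
  destruct (Hint m2 c) as [Iw3 Iwf3]; try lra.
  assert (Iw23 : ex_RInt w m1 c) by (apply ex_RInt_Chasles with m2; auto).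
  assert (Iwf23 : ex_RInt (fun u => w u * F u) m1 c) by (apply ex_RInt_Chasles with m2; auto).
  rewrite <- (Chasles_R w a m1 c Iw1 Iw23), <- (Chasles_R w m1 m2 c Iw2 Iw3).
  rewrite <- (Chasles_R _ a m1 c Iwf1 Iwf23), <- (Chasles_R _ m1 m2 c Iwf2 Iwf3).
  assert (B1 : Lb * RInt w a m1 <= RInt (fun u => w u * F u) a m1).
  { rewrite <- RInt_scal_R by auto. apply RInt_le; try lra; auto. apply ex_RInt_scal_R; auto.
    intros u Hu. destruct (Hpos u ltac:(lra)) as [[A1 A2] A3].
    assert (Hu2 : u < q - e).
    { clear Hm1 Hm2 Hd Iw1 Iw2 Iw3 Iwf1 Iwf2 Iwf3. unfold m1 in Hu. dmm; lra. }
    assert (Lb <= F u) by (apply Hlow; [lra|rewrite Rabs_left by lra; lra]).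
    rewrite (Rmult_comm (w u)). apply Rmult_le_compat_r; lra. }
  assert (B3 : Lb * RInt w m2 c <= RInt (fun u => w u * F u) m2 c).
  { rewrite <- RInt_scal_R by auto. apply RInt_le; try lra; auto. apply ex_RInt_scal_R; auto.
    intros u Hu. destruct (Hpos u ltac:(lra)) as [[A1 A2] A3].
    assert (Hu2 : u > q + e).
    { clear Hm1 Hm2 Hd Iw1 Iw2 Iw3 Iwf1 Iwf2 Iwf3 B1. unfold m2, m1 in Hu. dmm; lra. }
    assert (Lb <= F u) by (apply Hlow; [lra|rewrite Rabs_right by lra; lra]).
    rewrite (Rmult_comm (w u)). apply Rmult_le_compat_r; lra. }
  assert (B2 : 0 <= RInt (fun u => w u * F u) m1 m2).
  { apply RInt_ge_0; try lra; auto. intros u Hu. destruct (Hpos u ltac:(lra)) as [[A1 A2] A3]. nra. }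
  assert (B4 : RInt w m1 m2 <= W0 * (m2 - m1)).
  { apply RInt_le_const; try lra; auto. intros u Hu. destruct (Hpos u ltac:(lra)) as [[A1 A2] A3]. lra. }
  assert (W0 * (m2 - m1) <= 2 * e * W0) by nra.
  assert (Lb * RInt w m1 m2 <= Lb * (2 * e * W0)) by (apply Rmult_le_compat_l; lra).
  nra.
Qed.


Lemma Rpower_m1 x a : 0 < x -> Rpower x (a - 1) = Rpower x a / x.
Proof.
  intros Hx. unfold Rpower. unfold Rdiv. rewrite <- (exp_ln x) at 3 by lra.
  rewrite <- exp_Ropp, <- exp_plus. f_equal. ring.
Qed.

Lemma derive_pow x a : 0 < x -> is_derive (fun u => Rpower u a) x (a * Rpower x (a - 1)).
Proof. intros Hx. apply is_derive_Reals. apply derivable_pt_lim_power; exact Hx. Qed.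

Lemma pow_int alpha a c : 0 < alpha -> 0 < a -> a <= c ->
  (RInt (fun u => Rpower u (- alpha - 1)) a c : R) = (Rpower a (- alpha) - Rpower c (- alpha)) / alpha.
Proof.
  intros Hal Ha Hac.
  apply is_RInt_unique.
  replace ((Rpower a (- alpha) - Rpower c (- alpha)) / alpha) with
    (minus ((fun u => - Rpower u (- alpha) / alpha) c) ((fun u => - Rpower u (- alpha) / alpha) a))
    by (unfold minus, plus, opp; simpl; field; lra).
  apply (is_RInt_derive (V := R_CompleteNormedModule) (fun u => - Rpower u (- alpha) / alpha)).
  - intros x Hx. rewrite Rmin_left in Hx by lra. rewrite Rmax_right in Hx by lra.
    pose proof (derive_pow x (- alpha) ltac:(lra)) as D.
    evar (l : R).
    assert (D2 : is_derive (fun u => - Rpower u (- alpha) / alpha) x l).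
    { apply (is_derive_scal_l (fun u => Rpower u (- alpha)) x (- alpha * Rpower x (- alpha - 1)) (- / alpha)) in D.
      eapply is_derive_ext; [|exact D]. intros t. assert (E : Rpower t (- alpha) * (- / alpha) = - Rpower t (- alpha) / alpha) by (field; lra). exact E. }
    subst l. replace (Rpower x (- alpha - 1)) with ((- alpha * Rpower x (- alpha - 1)) * - / alpha) by (field; lra).
    exact D2.
  - intros x Hx. rewrite Rmin_left in Hx by lra. rewrite Rmax_right in Hx by lra.
    apply continuity_pt_filterlim. apply Rpower_cont_pt. lra.
Qed.

Lemma ex_RInt_cont_R (f : R -> R) a c : (forall z, Rmin a c <= z <= Rmax a c -> continuous f z) -> ex_RInt f a c.
Proof. intros H. apply (@ex_RInt_continuous R_CompleteNormedModule). exact H. Qed.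

Lemma Fc_nonneg b x0 delta alpha h : Hyp b x0 delta alpha h -> forall y, 0 <= Fc alpha h y.
Proof.
  intros H y. unfold Fc. apply Rmult_le_pos; [left; apply Rpower_pos|apply (h_nonneg _ _ _ _ _ H)].
Qed.

Lemma Fc_int b x0 delta alpha h : Hyp b x0 delta alpha h -> forall a c, 0 < a -> a <= c -> ex_RInt (Fc alpha h) a c.
Proof.
  intros H a c Ha Hac. apply (ex_RInt_cont_open _ (Fc alpha h)); auto.
  intros z Hz. apply (Fc_cont _ _ _ _ _ H). lra.
Qed.

Lemma Mint_mono b x0 delta alpha h : Hyp b x0 delta alpha h -> forall B B', 1 <= B -> B <= B' ->
  RInt (Fc alpha h) 1 B <= RInt (Fc alpha h) 1 B'.
Proof.
  intros H B B' HB HB'.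
  rewrite <- (Chasles_R _ 1 B B') by (apply (Fc_int _ _ _ _ _ H); lra).
  assert (0 <= RInt (Fc alpha h) B B').
  { apply RInt_ge_0; auto. apply (Fc_int _ _ _ _ _ H); lra. intros; apply (Fc_nonneg _ _ _ _ _ H). }
  lra.
Qed.

Lemma Mint_bound b x0 delta alpha h Hm : Hyp b x0 delta alpha h -> 0 < Hm -> (forall t, h t <= Hm) ->
  forall B, 1 <= B -> RInt (Fc alpha h) 1 B <= Hm / alpha.
Proof.
  intros H HHm Hb B HB. hyps H.
  apply Rle_trans with (RInt (fun u => Hm * Rpower u (- alpha - 1)) 1 B).
  - apply RInt_le; auto.
    + apply (Fc_int _ _ _ _ _ H); lra.
    + apply ex_RInt_scal_R. apply ex_RInt_cont_R. intros z Hz.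
      rewrite Rmin_left in Hz by lra. rewrite Rmax_right in Hz by lra.
      apply continuity_pt_filterlim. apply Rpower_cont_pt. lra.
    + intros z Hz. unfold Fc. rewrite Rmult_comm. apply Rmult_le_compat_r; [left; apply Rpower_pos|apply Hb].
  - rewrite RInt_scal_R.
    + rewrite pow_int by lra. rewrite Rpower_1 || idtac.
      assert (E1 : Rpower 1 (- alpha) = 1) by (unfold Rpower; rewrite ln_1, Rmult_0_r; apply exp_0).
      rewrite E1. pose proof (Rpower_pos B (- alpha)).
      apply Rmult_le_reg_r with alpha; [lra|]. field_simplify; [|lra|lra]. nra.
    + apply ex_RInt_cont_R. intros z Hz.
      rewrite Rmin_left in Hz by lra. rewrite Rmax_right in Hz by lra.
      apply continuity_pt_filterlim. apply Rpower_cont_pt. lra.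
Qed.

Lemma Fm_Fc alpha h x : Rpower x (- 1 - alpha) * h (ln x) = Fc alpha h x.
Proof. unfold Fc. replace (- 1 - alpha) with (- alpha - 1) by ring. reflexivity. Qed.

Lemma M_exists b x0 delta alpha h : Hyp b x0 delta alpha h ->
  exists l, is_improper_int_from (fun x => Rpower x (- 1 - alpha) * h (ln x)) 1 l /\
    (forall B, 1 <= B -> RInt (Fc alpha h) 1 B <= l) /\
    (forall eps, 0 < eps -> ev (fun B => 1 <= B /\ l - eps < RInt (Fc alpha h) 1 B)).
Proof.
  intros H. hyps H. destruct (h_bounded _ _ _ _ _ H) as [Hm [HHm Hb]].
  set (E := fun v => exists B, 1 <= B /\ v = RInt (Fc alpha h) 1 B).
  destruct (completeness E) as [l [Hl1 Hl2]].
  { exists (Hm / alpha). intros v [B [HB ->]]. apply (Mint_bound _ _ _ _ _ Hm H HHm Hb B HB). }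
  { exists (RInt (Fc alpha h) 1 1). exists 1. split; [lra|reflexivity]. }
  assert (Up : forall B, 1 <= B -> RInt (Fc alpha h) 1 B <= l).
  { intros B HB. apply Hl1. exists B; split; [lra|reflexivity]. }
  assert (Ev : forall eps, 0 < eps -> ev (fun B => 1 <= B /\ l - eps < RInt (Fc alpha h) 1 B)).
  { intros eps He.
    assert (exists B0, 1 <= B0 /\ l - eps < RInt (Fc alpha h) 1 B0).
    { apply Classical_Prop.NNPP. intros Hn. assert (l <= l - eps); [|lra].
      apply Hl2. intros v [B [HB ->]]. apply Rnot_lt_le. intros Hlt. apply Hn. exists B. split; auto. }
    destruct H6 as [B0 [HB0 HB0']]. exists B0. intros B HB. split; [lra|].
    pose proof (Mint_mono _ _ _ _ _ H B0 B HB0 HB). lra. }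
  exists l. split; [|split; auto].
  split.
  - intros B HB. apply integrable_of. apply (ex_RInt_ext (Fc alpha h)).
    + intros z _. symmetry; apply Fm_Fc.
    + apply (Fc_int _ _ _ _ _ H); lra.
  - intros eps He. destruct (Ev eps He) as [N HN]. exists N. intros B HB.
    destruct (HN B HB) as [HB1 HB2].
    rewrite RIntD_eq.
    + rewrite (RInt_ext _ (Fc alpha h)) by (intros z _; apply Fm_Fc).
      pose proof (Up B HB1). rewrite Rabs_left1 by lra. lra.
    + apply (ex_RInt_ext (Fc alpha h)).
      * intros z _. symmetry; apply Fm_Fc.
      * apply (Fc_int _ _ _ _ _ H); lra.
Qed.

Lemma refl_ex (k : R -> R) x a c : ex_RInt k a c -> ex_RInt (fun u => k (x - u)) (x - a) (x - c).
Proof.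
  intros H.
  pose proof (@ex_RInt_comp_lin R_NormedModule k (-1) x (x - a) (x - c)) as H1.
  replace (-1 * (x - a) + x) with a in H1 by ring. replace (-1 * (x - c) + x) with c in H1 by ring.
  specialize (H1 H).
  pose proof (@ex_RInt_scal R_NormedModule _ _ _ (-1) H1) as H2.
  eapply ex_RInt_ext; [|exact H2]. intros z _.
  assert (E : -1 * (-1 * k (-1 * z + x)) = k (x - z)) by (replace (-1 * z + x) with (x - z) by ring; ring).
  exact E.
Qed.

Lemma refl_int (k : R -> R) x a c : ex_RInt k a c -> (RInt (fun u => k (x - u)) (x - c) (x - a) : R) = RInt k a c.
Proof.
  intros H.
  pose proof (@RInt_comp_lin R_CompleteNormedModule k (-1) x (x - a) (x - c)) as E.
  replace (-1 * (x - a) + x) with a in E by ring. replace (-1 * (x - c) + x) with c in E by ring.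
  specialize (E H).
  pose proof (refl_ex k x a c H) as Hk.
  pose proof (@RInt_opp R_CompleteNormedModule (fun u => k (x - u)) (x - a) (x - c) Hk) as E2.
  pose proof (@opp_RInt_swap R_CompleteNormedModule (fun u => k (x - u)) (x - a) (x - c) Hk) as E3.
  assert (E4 : RInt (fun y => scal (-1) (k (-1 * y + x))) (x - a) (x - c) = RInt (fun u => opp (k (x - u))) (x - a) (x - c)).
  { apply (@RInt_ext R_CompleteNormedModule). intros z _.
    assert (E5 : -1 * k (-1 * z + x) = - k (x - z)) by (replace (-1 * z + x) with (x - z) by ring; ring).
    exact E5. }
  etransitivity; [|exact E]. etransitivity; [|symmetry; exact E4].
  etransitivity; [|symmetry; exact E2]. symmetry; exact E3.
Qed.

Lemma conv_val b x0 delta alpha h : Hyp b x0 delta alpha h -> forall x,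
  is_improper_int (fun u => phi_fun alpha h (x - u) * phi_fun alpha h u)
    (RInt (fun u => phi_fun alpha h (x - u) * phi_fun alpha h u) 1 (Rmax 1 (x - 1))).
Proof.
  intros H x. set (g := fun u => phi_fun alpha h (x - u) * phi_fun alpha h u).
  set (m2 := Rmax 1 (x - 1)).
  assert (Hm2 : 1 <= m2) by apply Rmax_l.
  assert (Hg : forall a c, a <= c -> ex_RInt g a c) by (intros; apply (conv_int _ _ _ _ _ H); auto).
  split.
  - intros a c Hac. apply integrable_of. apply Hg; auto.
  - intros eps He. exists (m2 + 1). intros a c Ha Hc.
    rewrite RIntD_eq by (apply Hg; lra).
    rewrite <- (Chasles_R g a 1 c) by (apply Hg; lra).
    rewrite <- (Chasles_R g 1 m2 c) by (apply Hg; lra).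
    rewrite (RInt_zero_open g a 1); [|lra|].
    2:{ intros z Hz. unfold g, phi_fun at 2. destruct (Rle_dec 1 z); [lra|ring]. }
    rewrite (RInt_zero_open g m2 c); [|lra|].
    2:{ intros z Hz. unfold g, phi_fun at 1.
        assert (x - z < 1) by (pose proof (Rmax_r 1 (x - 1)); fold m2 in H0; lra).
        destruct (Rle_dec 1 (x - z)); [lra|ring]. }
    replace (0 + (RInt g 1 m2 + 0) - RInt g 1 m2) with 0 by ring. rewrite Rabs_R0. exact He.
Qed.

Lemma pow_neg_mono y z a : 0 < y <= z -> 0 <= a -> Rpower z (- a) <= Rpower y (- a).
Proof.
  intros Hyz Ha. rewrite !Rpower_Ropp. apply Rinv_le_contravar; [apply Rpower_pos|].
  apply Rle_Rpower_l; lra.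
Qed.

Lemma phi_nonneg b x0 delta alpha h : Hyp b x0 delta alpha h -> forall y, 0 <= phi_fun alpha h y.
Proof.
  intros H y. unfold phi_fun. destruct (Rle_dec 1 y); [|lra].
  apply Rmult_le_pos; [left; apply Rpower_pos|apply (h_nonneg _ _ _ _ _ H)].
Qed.

Lemma phi_le_pow b x0 delta alpha h Hm : Hyp b x0 delta alpha h -> (forall t, h t <= Hm) ->
  forall y, 1 <= y -> phi_fun alpha h y <= Hm * Rpower y (- alpha - 1).
Proof.
  intros H Hb y Hy. rewrite phi_eq by lra. rewrite Rmult_comm. apply Rmult_le_compat_r; [left; apply Rpower_pos|apply Hb].
Qed.

Lemma phi_le b x0 delta alpha h Hm : Hyp b x0 delta alpha h -> 0 < Hm -> (forall t, h t <= Hm) ->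
  forall y, phi_fun alpha h y <= Hm.
Proof.
  intros H HHm Hb y. hyps H. destruct (Rle_dec 1 y).
  - eapply Rle_trans; [apply (phi_le_pow _ _ _ _ _ Hm H Hb y r)|].
    assert (Rpower y (- alpha - 1) <= 1).
    { replace (- alpha - 1) with (- (alpha + 1)) by ring.
      eapply Rle_trans; [apply (pow_neg_mono 1 y); lra|]. right. unfold Rpower. rewrite ln_1, Rmult_0_r. apply exp_0. }
    pose proof (Rpower_pos y (- alpha - 1)). nra.
  - unfold phi_fun. destruct (Rle_dec 1 y); [contradiction|lra].
Qed.

Lemma pow_cont_R a z : 0 < z -> continuous (fun u => Rpower u a) z.
Proof. intros Hz. apply continuity_pt_filterlim. apply Rpower_cont_pt. exact Hz. Qed.

Lemma mid_bound b x0 delta alpha h Hm : Hyp b x0 delta alpha h -> 0 < Hm -> (forall t, h t <= Hm) ->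
  forall x A, 1 <= A -> 2 * A <= x ->
  RInt (fun u => phi_fun alpha h (x - u) * phi_fun alpha h u) A (x - A)
    <= Hm * Hm * Rpower (x / 2) (- alpha - 1) * (2 * Rpower A (- alpha) / alpha).
Proof.
  intros H HHm Hb x A HA HAx. hyps H.
  set (p := fun u => Rpower u (- alpha - 1)).
  set (K := Hm * Hm * Rpower (x / 2) (- alpha - 1)).
  assert (Hp : ex_RInt p A (x - A)).
  { apply ex_RInt_cont_R. intros z Hz. rewrite Rmin_left in Hz by lra. rewrite Rmax_right in Hz by lra.
    apply pow_cont_R. lra. }
  assert (Hp' : ex_RInt (fun u => p (x - u)) A (x - A)).
  { pose proof (refl_ex p x (x - A) A). replace (x - (x - A)) with A in H6 by ring. apply H6.
    apply ex_RInt_cont_R. intros z Hz. rewrite Rmin_right in Hz by lra. rewrite Rmax_left in Hz by lra.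
    apply pow_cont_R. lra. }
  apply Rle_trans with (RInt (fun u => K * (p u + p (x - u))) A (x - A)).
  - apply RInt_le; try lra.
    + apply (conv_int _ _ _ _ _ H). lra.
    + apply ex_RInt_scal_R. apply (ex_RInt_plus p (fun u => p (x - u))); auto.
    + intros u Hu.
      pose proof (phi_le_pow _ _ _ _ _ Hm H Hb u ltac:(lra)).
      pose proof (phi_le_pow _ _ _ _ _ Hm H Hb (x - u) ltac:(lra)).
      pose proof (phi_nonneg _ _ _ _ _ H u). pose proof (phi_nonneg _ _ _ _ _ H (x - u)).
      assert (Hpp : p (x - u) * p u <= Rpower (x / 2) (- alpha - 1) * (p u + p (x - u))).
      { unfold p. pose proof (Rpower_pos u (- alpha - 1)). pose proof (Rpower_pos (x - u) (- alpha - 1)).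
        replace (- alpha - 1) with (- (alpha + 1)) by ring.
        replace (- alpha - 1) with (- (alpha + 1)) in H10, H11 by ring.
        destruct (Rle_dec u (x / 2)).
        - pose proof (pow_neg_mono (x / 2) (x - u) (alpha + 1) ltac:(lra) ltac:(lra)).
          pose proof (Rpower_pos (x/2) (- (alpha + 1))). nra.
        - pose proof (pow_neg_mono (x / 2) u (alpha + 1) ltac:(lra) ltac:(lra)).
          pose proof (Rpower_pos (x/2) (- (alpha + 1))). nra. }
      unfold K. fold (p u) in H6. fold (p (x - u)) in H7.
      assert (phi_fun alpha h (x - u) * phi_fun alpha h u <= (Hm * p (x - u)) * (Hm * p u)).
      { apply Rmult_le_compat; auto. }
      assert (Hm * Hm * (p (x - u) * p u) <= Hm * Hm * (Rpower (x / 2) (- alpha - 1) * (p u + p (x - u)))).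
      { apply Rmult_le_compat_l; [nra|exact Hpp]. }
      nra.
  - rewrite RInt_scal_R by (apply (ex_RInt_plus p (fun u => p (x - u))); auto).
    assert (Eplus : (RInt (fun u => p u + p (x - u)) A (x - A) : R) = RInt p A (x - A) + RInt (fun u => p (x - u)) A (x - A)).
    { apply (RInt_plus p (fun u => p (x - u))); auto. }
    rewrite Eplus.
    pose proof (refl_int p x A (x - A) Hp) as R1. replace (x - (x - A)) with A in R1 by ring.
    rewrite R1.
    unfold p. rewrite pow_int by lra.
    pose proof (Rpower_pos (x - A) (- alpha)). pose proof (Rpower_pos A (- alpha)).
    assert (0 <= K) by (unfold K; pose proof (Rpower_pos (x / 2) (- alpha - 1)); apply Rmult_le_pos; [nra|lra]).
    apply Rmult_le_compat_l; [lra|].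
    apply Rmult_le_reg_r with alpha; [lra|]. field_simplify; lra.
Qed.

Lemma ratio_alg M Hm c e N I : 0 < M -> 0 <= Hm -> 0 < c -> 0 < e <= 1/4 ->
  2*(1-e)*c*(M - e - 2*e*Hm) <= N -> N <= 2*(1+e)*c*M + e*c ->
  (1-e)*(1-2*e)*c <= I -> I <= (1+e)*c ->
  Rabs (N / (2 * M * I) - 1) <= e * (2 * (8 * M + 2 + 4 * Hm) / M).
Proof.
  intros HM HHm Hc He HN1 HN2 HI1 HI2.
  set (Dn := 2 * M * I).
  assert (HI3 : c / 4 <= I).
  { assert ((1-e)*(1-2*e) >= 1/4) by nra. nra. }
  assert (HDn : M * c / 2 <= Dn) by (unfold Dn; nra).
  assert (HDn0 : 0 < Dn) by (assert (0 < M * c) by nra; lra).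
  assert (U1 : N - Dn <= c * e * (8 * M + 2 + 4 * Hm)).
  { unfold Dn. assert (2 * M * ((1 - e) * (1 - 2 * e) * c) <= 2 * M * I) by (apply Rmult_le_compat_l; lra).
    assert (0 <= c * e * (4 * M * e + 1 + 4 * Hm)) by (apply Rmult_le_pos; [nra|nra]).
    nra. }
  assert (U2 : Dn - N <= c * e * (8 * M + 2 + 4 * Hm)).
  { unfold Dn. assert (2 * M * I <= 2 * M * ((1 + e) * c)) by (apply Rmult_le_compat_l; lra).
    assert (0 <= c * e * (4 * M + 2 * e * (1 + 2 * Hm))) by (apply Rmult_le_pos; [nra|nra]).
    nra. }
  replace (N / Dn - 1) with ((N - Dn) / Dn) by (field; lra).
  unfold Rdiv. rewrite Rabs_mult, (Rabs_right (/ Dn)) by (left; apply Rinv_0_lt_compat; lra).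
  assert (Rabs (N - Dn) <= c * e * (8 * M + 2 + 4 * Hm)) by (apply Rabs_le; lra).
  apply Rle_trans with (c * e * (8 * M + 2 + 4 * Hm) * / Dn).
  - apply Rmult_le_compat_r; [left; apply Rinv_0_lt_compat; lra|exact H].
  - apply Rmult_le_reg_r with Dn; [lra|].
    rewrite Rmult_assoc, Rinv_l, Rmult_1_r by lra.
    replace (e * (2 * (8 * M + 2 + 4 * Hm) * / M) * Dn) with ((c * e * (8 * M + 2 + 4 * Hm)) * (2 * Dn / (M * c))) by (field; lra).
    assert (1 <= 2 * Dn / (M * c)).
    { apply Rmult_le_reg_r with (M * c); [nra|]. field_simplify; nra. }
    assert (0 <= c * e * (8 * M + 2 + 4 * Hm)) by (apply Rmult_le_pos; nra).
    nra.
Qed.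

Lemma Mint_pos b x0 delta alpha h : Hyp b x0 delta alpha h -> 0 < RInt (Fc alpha h) 1 x0.
Proof.
  intros H. hyps H.
  assert (E : (RInt (fun _ => 0) 1 x0 : R) = 0) by (rewrite RInt_const_R; ring).
  rewrite <- E. apply RInt_lt; [lra| | |].
  - intros z Hz. apply (Fc_cont _ _ _ _ _ H). lra.
  - intros; apply continuous_const.
  - intros z Hz. unfold Fc. apply Rmult_lt_0_compat; [apply Rpower_pos|].
    apply (H_pos _ _ _ _ _ H); lra.
Qed.

Lemma phi_Fc_int b x0 delta alpha h : Hyp b x0 delta alpha h -> forall A, 1 <= A ->
  (RInt (phi_fun alpha h) 1 A : R) = RInt (Fc alpha h) 1 A.
Proof.
  intros H A HA. apply RInt_ext. intros z Hz. rewrite Rmin_left in Hz by lra. apply phi_eq. lra.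
Qed.

Ltac req := match goal with |- ?a = ?b => change (@eq R a b); ring end.

Lemma asymp_main b x0 delta alpha h : Hyp b x0 delta alpha h ->
  forall l, (forall B, 1 <= B -> RInt (Fc alpha h) 1 B <= l) ->
  (forall eps, 0 < eps -> ev (fun B => 1 <= B /\ l - eps < RInt (Fc alpha h) 1 B)) ->
  asymp (conv (phi_fun alpha h) (phi_fun alpha h)) (fun x => 2 * l * Defs.RInt (phi_fun alpha h) x (x + 1)).
Proof.
  intros H l Up Ev eps Heps. hyps H.
  destruct (h_bounded _ _ _ _ _ H) as [Hm [HHm Hb]].
  pose proof (Mint_pos _ _ _ _ _ H) as Mp. pose proof (Up x0 ltac:(lra)) as Mp2.
  assert (Hl : 0 < l) by lra.
  set (K := 2 * (8 * l + 2 + 4 * Hm) / l).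
  assert (HK : 0 < K) by (unfold K; apply Rdiv_lt_0_compat; lra).
  set (e := Rmin (1/4) (eps / (2 * K))).
  assert (He1 : e <= 1/4) by apply Rmin_l.
  assert (He2 : e <= eps / (2 * K)) by apply Rmin_r.
  assert (He0 : 0 < e) by (unfold e; apply Rmin_glb_lt; [lra|apply Rdiv_lt_0_compat; lra]).
  assert (HeK : e * K < eps).
  { apply Rle_lt_trans with (eps / (2 * K) * K); [apply Rmult_le_compat_r; lra|].
    replace (eps / (2 * K) * K) with (eps / 2) by (field; lra). lra. }
  destruct (f_flat _ _ _ _ _ H e ltac:(lra)) as [th [Hth Hev]].
  destruct (Ev e He0) as [NB HNB].
  set (B0 := Hm * Hm * Rpower (/ 2) (- alpha - 1) * (2 / alpha)).
  assert (HB0 : 0 < B0).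
  { unfold B0. pose proof (Rpower_pos (/2) (- alpha - 1)). apply Rmult_lt_0_compat; [|apply Rdiv_lt_0_compat; lra].
    apply Rmult_lt_0_compat; [nra|lra]. }
  assert (Hath : 0 < alpha * th) by nra.
  pose proof (ev_and _ _ Hev (ev_and _ _ (ev_pow_small (1 - th) (1/4) ltac:(lra) ltac:(lra))
    (ev_and _ _ (ev_ge 8) (ev_and _ _ (ev_pow_small th (/ Rmax 1 NB) ltac:(lra) ltac:(apply Rinv_0_lt_compat; pose proof (Rmax_l 1 NB); lra))
      (ev_lnpow_small (alpha * th) (e / B0) Hath ltac:(apply Rdiv_lt_0_compat; lra)))))) as Hev2.
  destruct Hev2 as [N HN]. exists N. intros x Hx.
  destruct (HN x Hx) as [[Hx2 [c [q [Hc Hwin]]]] [C2 [C3 [C4 C5]]]].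
  set (f := phi_fun alpha h).
  set (g := fun u => f (x - u) * f u).
  set (A := Rpower x th).
  assert (HL : 0 < ln x) by (rewrite <- ln_1; apply ln_increasing; lra).
  assert (Hc0 : 0 < c).
  { eapply Rlt_le_trans; [|exact Hc]. apply Rmult_lt_0_compat; [apply Rpower_pos|apply Rinv_0_lt_compat; lra]. }
  assert (HA1 : 1 <= A) by (apply Rpower_ge1; lra).
  assert (HA2 : A <= x / 4).
  { assert (E : Rpower x (- (1 - th)) * x = A) by (unfold A; rewrite Rpower_mul_x by lra; f_equal; ring).
    assert (Rpower x (- (1 - th)) * x <= 1/4 * x) by (apply Rmult_le_compat_r; lra). lra. }
  assert (HANB : Rmax 1 NB <= A).
  { assert (E : Rpower x (- th) * A = 1).
    { unfold A. rewrite <- Rpower_plus. replace (- th + th) with 0 by ring. apply Rpower_O; lra. }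
    assert (HM1 : 0 < Rmax 1 NB) by (pose proof (Rmax_l 1 NB); lra).
    assert (Rpower x (- th) * A <= / Rmax 1 NB * A) by (apply Rmult_le_compat_r; lra).
    apply Rmult_le_reg_l with (/ Rmax 1 NB); [apply Rinv_0_lt_compat; lra|].
    rewrite Rinv_l by lra. lra. }
  destruct (HNB A ltac:(pose proof (Rmax_r 1 NB); lra)) as [_ HMA].
  assert (Ig : forall a c, a <= c -> ex_RInt g a c) by (intros; apply (conv_int _ _ _ _ _ H); auto).
  assert (If : forall a c, a <= c -> ex_RInt f a c) by (intros; apply (phi_int _ _ _ _ _ H); auto).
  assert (f0 : forall y, 0 <= f y) by (intros; apply (phi_nonneg _ _ _ _ _ H)).
  assert (fHm : forall y, f y <= Hm) by (intros; apply (phi_le _ _ _ _ _ Hm H HHm Hb)).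
  assert (Econv : conv f f x = RInt g 1 (x - 1)).
  { unfold conv, g, f. rewrite (improper_int_eq _ _ (conv_val _ _ _ _ _ H x)).
    rewrite Rmax_right by lra. reflexivity. }
  assert (Esplit : (RInt g 1 (x - 1) : R) = RInt g 1 A + RInt g A (x - A) + RInt g (x - A) (x - 1)).
  { rewrite <- (Chasles_R g 1 A (x - 1)) by (apply Ig; lra).
    rewrite <- (Chasles_R g A (x - A) (x - 1)) by (apply Ig; lra). ring. }
  assert (Esym : (RInt g (x - A) (x - 1) : R) = RInt g 1 A).
  { rewrite <- (refl_int g x 1 A) by (apply Ig; lra).
    apply RInt_ext. intros z _. unfold g. replace (x - (x - z)) with z by ring.
    assert (E : f (x - z) * f z = f z * f (x - z)) by ring. exact E. }
  set (J := RInt g 1 A). set (Mid := RInt g A (x - A)).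
  assert (HfA : (RInt f 1 A : R) = RInt (Fc alpha h) 1 A) by (apply (phi_Fc_int _ _ _ _ _ H); lra).
  assert (JU : J <= (1 + e) * c * l).
  { unfold J. apply Rle_trans with (RInt (fun u => ((1 + e) * c) * f u) 1 A).
    - apply RInt_le; try lra; [apply Ig; lra|apply ex_RInt_scal_R; apply If; lra|].
      intros u Hu. destruct (Hwin (x - u)) as [W _]; [fold A; lra|].
      unfold g. apply Rmult_le_compat_r; [apply f0|exact W].
    - rewrite RInt_scal_R by (apply If; lra). rewrite HfA.
      pose proof (Up A ltac:(lra)). apply Rmult_le_compat_l; [nra|lra]. }
  assert (JL : (1 - e) * c * (l - e - 2 * e * Hm) <= J).
  { pose proof (split_lower f (fun u => f (x - u)) 1 A (x - q) e Hm ((1 - e) * c)) as SL.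
    assert (EJ : (RInt (fun u => f u * f (x - u)) 1 A : R) = J).
    { unfold J. apply RInt_ext. intros z _. unfold g. req. }
    cbv beta in SL. rewrite EJ in SL. eapply Rle_trans; [|apply SL]; try lra.
    - apply Rmult_le_compat_l; [nra|]. rewrite HfA. lra.
    - nra.
    - intros a' c' H1' H2' H3'. split; [apply If; lra|].
      apply (ex_RInt_ext g); [intros z _; unfold g; req|apply Ig; lra].
    - intros u Hu. split; [split; auto|apply f0].
    - intros u Hu Hq. apply (Hwin (x - u)); [fold A; lra|].
      replace (x - u - q) with (- (u - (x - q))) by ring. rewrite Rabs_Ropp. exact Hq. }
  assert (Mid0 : 0 <= Mid).
  { unfold Mid. apply RInt_ge_0; [lra|apply Ig; lra|]. intros u _. unfold g. apply Rmult_le_pos; auto. }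
  assert (MidU : Mid <= e * c).
  { unfold Mid. eapply Rle_trans; [apply (mid_bound _ _ _ _ _ Hm H HHm Hb x A); lra|].
    assert (E1 : Rpower (x / 2) (- alpha - 1) = Rpower x (- alpha - 1) * Rpower (/ 2) (- alpha - 1)).
    { unfold Rdiv. rewrite Rpower_mult_distr by lra. reflexivity. }
    assert (E2 : Rpower A (- alpha) = Rpower x (- (alpha * th))).
    { unfold A. rewrite Rpower_mult. f_equal; ring. }
    rewrite E1, E2.
    set (X := Rpower x (- (alpha * th))). set (Px := Rpower x (- alpha - 1)).
    assert (HX : B0 * X <= e / ln x).
    { apply Rmult_le_reg_r with (ln x); [lra|].
      replace (e / ln x * ln x) with e by (field; lra).
      apply Rmult_le_compat_l with (r := B0) in C5; [|lra].
      replace (B0 * (e / B0)) with e in C5 by (field; lra). fold X in C5. lra. }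
    assert (HPx : 0 < Px) by apply Rpower_pos.
    replace (Hm * Hm * (Px * Rpower (/ 2) (- alpha - 1)) * (2 * X / alpha)) with (Px * (B0 * X)) by (unfold B0; field; lra).
    apply Rle_trans with (Px * (e / ln x)); [apply Rmult_le_compat_l; lra|].
    replace (Px * (e / ln x)) with (e * (Px * / ln x)) by (field; lra).
    apply Rmult_le_compat_l; [lra|]. unfold Px. exact Hc. }
  assert (II : ex_RInt f x (x + 1)) by (apply If; lra).
  set (I := RInt f x (x + 1)).
  assert (IU : I <= (1 + e) * c).
  { unfold I. eapply Rle_trans; [apply (RInt_le_const f x (x + 1) ((1 + e) * c)); auto; try lra|].
    - intros z Hz. apply (Hwin z). fold A. lra.
    - lra. }
  assert (IL : (1 - e) * (1 - 2 * e) * c <= I).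
  { pose proof (split_lower (fun _ => 1) f x (x + 1) q e 1 ((1 - e) * c)) as SL.
    assert (EI : (RInt (fun u => 1 * f u) x (x + 1) : R) = I).
    { unfold I. apply RInt_ext. intros z _. req. }
    cbv beta in SL. rewrite EI, RInt_const_R in SL. eapply Rle_trans; [|apply SL]; try lra.
    - nra.
    - intros a' c' H1' H2' H3'. split; [apply ex_RInt_const|].
      apply (ex_RInt_ext f); [intros z _; req|apply If; lra].
    - intros u Hu. split; [lra|apply f0].
    - intros u Hu Hq. apply (Hwin u); [fold A; lra|exact Hq]. }
  rewrite Econv, Esplit, Esym. fold J. fold Mid.
  rewrite RIntD_eq by exact II. fold I.
  eapply Rle_lt_trans; [|exact HeK].
  apply (ratio_alg l Hm c e (J + Mid + J) I); try lra.
Qed.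

Import Defs.

Theorem lemma3p2 (b x0 delta alpha : R) (h : R -> R)
  (Hx0 : 1 < x0) (Hx0b : x0 < b)
  (Hd0 : 0 < delta) (Hd1 : delta < x0 - 1) (Hd2 : delta < b - x0)
  (Hcont : continuity h)
  (Hper : forall t, h (t + ln b) = h t)
  (Hpos : forall x, 1 <= x <= b -> x <> x0 -> 0 < h (ln x))
  (Hzero : h (ln x0) = 0)
  (Hnear : forall x, 0 < Rabs (x - x0) < delta ->
             h (ln x) = - / ln (Rabs (x - x0)))
  (Halpha : 0 < alpha) :
  is_improper_int_from (fun x => Rpower x (- 1 - alpha) * h (ln x)) 1
      (M_const alpha h) /\
  (forall x, is_improper_int (fun u => phi_fun alpha h (x - u) * phi_fun alpha h u)
      (conv (phi_fun alpha h) (phi_fun alpha h) x)) /\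
  (forall x, integrable_on (phi_fun alpha h) x (x + 1)) /\
  asymp (conv (phi_fun alpha h) (phi_fun alpha h))
        (fun x => 2 * M_const alpha h * RInt (phi_fun alpha h) x (x + 1)) /\
  (forall x, 2 * M_const alpha h * RInt (phi_fun alpha h) x (x + 1)
             = 2 * (M_const alpha h) ^ 2 * mu_Ioc alpha h x (x + 1)).
Proof.
  assert (H : Hyp b x0 delta alpha h) by (constructor; auto).
  destruct (M_exists _ _ _ _ _ H) as [l [Hl [Up Ev]]].
  assert (EM : M_const alpha h = l) by (unfold M_const; apply improper_int_from_eq; exact Hl).
  pose proof (Mint_pos _ _ _ _ _ H) as Mp. pose proof (Up x0 ltac:(lra)) as Mp2.
  split; [rewrite EM; exact Hl|].
  split.
  { intros x. unfold conv. rewrite (improper_int_eq _ _ (conv_val _ _ _ _ _ H x)). apply (conv_val _ _ _ _ _ H). }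
  split.
  { intros x. apply integrable_of. apply (phi_int _ _ _ _ _ H); lra. }
  split.
  { rewrite EM. apply (asymp_main _ _ _ _ _ H l Up Ev). }
  intros x. unfold mu_Ioc. rewrite EM. field. lra.
Qed.
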